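(* Let $A$ be a Büchi automaton over $2^{AP}$, $\varphi$ an LTL formula, and $A'$ a Büchi automaton with $\mathcal{L}(A')=\mathcal{L}(A)\cap\{\pi\mid\pi\models\varphi\}$. Then $\mathrm{Cn}_{LTL}(\mathrm{supp}(A)\cup\{\varphi\})=\mathrm{supp}(A')$.
   Context: Fix a finite nonempty $AP$. LTL formulae $\varphi::=\bot\mid p\mid\neg\varphi\mid\varphi\lor\varphi\mid X\varphi\mid\varphi U\varphi$ with the standard semantics on traces $\pi\in(2^{AP})^\omega$. Kripke structures $M=(S,I,T,\lambda)$ (finite $S$, nonempty $I$, left-total $T$, $\lambda:S\to 2^{AP}$); $M\models\varphi$ iff all traces of $M$ satisfy $\varphi$; $\mathrm{Cn}_{LTL}(X)$ = formulae satisfied by every Kripke structure satisfying all of $X$. Büchi automata over alphabet $2^{AP}$ accept infinite words via runs from initial states visiting recurrence states infinitely often; $\mathcal{L}(A)$ is the language. $\mathrm{supp}(A):=\{\psi\mid\pi\models\psi\ \forall\pi\in\mathcal{L}(A)\}$. *)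

(* Defs.v *)
From mathcomp Require Import all_boot.
Unset Strict Implicit. Unset Printing Implicit Defensive.

Section LTL.
Variable AP : finType.

Definition letter := {set AP}.
Definition trace := nat -> letter.

Inductive ltl : Type :=
| LFalse : ltl
| LAtom : AP -> ltl
| LNot : ltl -> ltl
| LOr : ltl -> ltl -> ltl
| LNext : ltl -> ltl
| LUntil : ltl -> ltl -> ltl.

Definition suffix (pi : trace) (k : nat) : trace := fun n => pi (k + n).

Fixpoint models (pi : trace) (phi : ltl) : Prop :=
  match phi with
  | LFalse => False
  | LAtom p => p \in pi 0
  | LNot f => ~ models pi f
  | LOr f g => models pi f \/ models pi g
  | LNext f => models (suffix pi 1) f
  | LUntil f g => exists k, models (suffix pi k) g /\
                    forall j, j < k -> models (suffix pi j) f
  end.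

Record kripke := Kripke {
  kS : finType;
  kI : {set kS};
  kT : rel kS;
  klab : kS -> letter;
  kI_nonempty : kI != set0;
  kT_total : forall s, exists s', kT s s'
}.

Definition kpath (M : kripke) (r : nat -> kS M) : Prop :=
  r 0 \in kI M /\ forall i, kT M (r i) (r i.+1).

Definition ktrace (M : kripke) (pi : trace) : Prop :=
  exists r : nat -> kS M, kpath M r /\ forall i, pi i = klab M (r i).

Definition kmodels (M : kripke) (phi : ltl) : Prop :=
  forall pi, ktrace M pi -> models pi phi.

Definition Cn (X : ltl -> Prop) (phi : ltl) : Prop :=
  forall M : kripke, (forall psi, X psi -> kmodels M psi) -> kmodels M phi.

Record buchi := Buchi {
  bQ : finType;
  binit : {set bQ};
  bdelta : bQ -> letter -> bQ -> bool;
  bacc : {set bQ}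
}.

Definition accepting_run (A : buchi) (w : trace) (r : nat -> bQ A) : Prop :=
  r 0 \in binit A /\ (forall i, bdelta A (r i) (w i) (r i.+1)) /\
  (forall n, exists m, n <= m /\ r m \in bacc A).

Definition lang (A : buchi) (w : trace) : Prop :=
  exists r, accepting_run A w r.

Definition supp (A : buchi) (psi : ltl) : Prop :=
  forall pi, lang A pi -> models pi psi.

End LTL.
Arguments LFalse {AP}.
Arguments models {AP}.
Arguments lang {AP}.
Arguments supp {AP}.
Arguments Cn {AP}.
Arguments kmodels {AP}.
Arguments ktrace {AP}.

(* Main.v *)
Require Import Defs.
From mathcomp Require Import all_boot.
From mathcomp Require Import zify.
From Stdlib Require List.
From Stdlib Require Import Classical ClassicalEpsilon FunctionalExtensionality.

Definition gstep (i j x : nat) : nat := if x.+1 == j then i else x.+1.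
Fixpoint gf (i j n : nat) : nat :=
  match n with 0 => 0 | n.+1 => gstep i j (gf i j n) end.

Lemma gstep_lt i j x : i < j -> x < j -> gstep i j x < j.
Proof. rewrite /gstep; case: eqP => [_ //|]; lia. Qed.

Lemma gf_lt i j n : i < j -> gf i j n < j.
Proof. move=> hij; elim: n => [|n IH] /=; [lia| exact: gstep_lt]. Qed.

Lemma gf_add i j n m : gf i j n + m < j -> gf i j (n + m) = gf i j n + m.
Proof.
elim: m => [|m IH] h; first by rewrite !addn0.
rewrite addnS /= IH; last lia.
rewrite /gstep; case: eqP; lia.
Qed.

Lemma gf_wrap i j n : i < j -> gf i j (n + (j - gf i j n)) = i.
Proof.
move=> hij; have hx := @gf_lt i j n hij.
have -> : j - gf i j n = (j - gf i j n).-1.+1 by lia.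
rewrite addnS /= gf_add; last lia.
rewrite /gstep; case: eqP; lia.
Qed.

Lemma gf_S i j n : gf i j n.+1 = (gf i j n).+1 \/ ((gf i j n).+1 = j /\ gf i j n.+1 = i).
Proof. rewrite /= /gstep; case: eqP; [right|left]; by []. Qed.

Notation sfx := (@Defs.suffix _).
Arguments LAtom {AP}. Arguments LNot {AP}. Arguments LOr {AP}. Arguments LNext {AP}. Arguments LUntil {AP}.

Definition T (AP : finType) (p : trace AP) (f : ltl AP) (n : nat) := models (sfx p n) f.
Arguments T {AP}.

Lemma suffix_suffix AP (p : trace AP) a b : sfx (sfx p a) b = sfx p (a + b).
Proof. apply: functional_extensionality => x; by rewrite /Defs.suffix addnA. Qed.

Lemma T_atom AP (p : trace AP) a n : T p (LAtom a) n <-> a \in p n.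
Proof. by rewrite /T /= /Defs.suffix addn0. Qed.

Lemma T_next AP (p : trace AP) f n : T p (LNext f) n <-> T p f n.+1.
Proof. by rewrite /T /= suffix_suffix addn1. Qed.

Lemma T_until AP (p : trace AP) f h n : T p (LUntil f h) n <->
  exists k, T p h (n + k) /\ forall m, m < k -> T p f (n + m).
Proof.
rewrite /T /=; split=> -[k [H1 H2]]; exists k;
  (split; [by move: H1; rewrite suffix_suffix | by move=> m hm; move: (H2 m hm); rewrite suffix_suffix]).
Qed.

Lemma U_step AP (p : trace AP) f h n :
  T p f n -> T p (LUntil f h) n.+1 -> T p (LUntil f h) n.
Proof.
move=> Hf /T_until [k [Hk Hm]]; apply/T_until; exists k.+1; split.
  by have -> : n + k.+1 = n.+1 + k by lia.
case=> [|m] hm; first by rewrite addn0.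
have -> : n + m.+1 = n.+1 + m by lia.
by apply: Hm.
Qed.

Lemma U_base AP (p : trace AP) f h n : T p h n -> T p (LUntil f h) n.
Proof. move=> H; apply/T_until; exists 0; by rewrite addn0. Qed.

Lemma U_back AP (p : trace AP) f h n d :
  T p (LUntil f h) (n + d) -> (forall m, m < d -> T p f (n + m)) -> T p (LUntil f h) n.
Proof.
elim: d n => [|d IH] n; first by rewrite addn0.
move=> H Hf; apply: U_step; first by rewrite -[n]addn0; apply: Hf.
apply: IH; first by have <- : n + d.+1 = n.+1 + d by lia.
move=> m hm; have -> : n.+1 + m = n + m.+1 by lia.
by apply: Hf.
Qed.

Lemma U_fwd AP (p : trace AP) f h n k m :
  T p h (n + k) -> (forall m, m < k -> T p f (n + m)) -> m <= k -> T p (LUntil f h) (n + m).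
Proof.
move=> Hh Hf hm; apply/T_until; exists (k - m); split.
  by rewrite -addnA subnKC.
by move=> m' hm'; rewrite -addnA; apply: Hf; lia.
Qed.

Fixpoint sub AP (f : ltl AP) : list (ltl AP) :=
  match f with
  | LFalse => [:: LFalse]
  | LAtom a => [:: LAtom a]
  | LNot g => LNot g :: sub _ g
  | LOr g h => LOr g h :: (sub _ g ++ sub _ h)
  | LNext g => LNext g :: sub _ g
  | LUntil g h => LUntil g h :: (sub _ g ++ sub _ h)
  end.
Arguments sub {AP}.

Lemma sub_self AP (f : ltl AP) : List.In f (sub f).
Proof. by case: f => /=; auto. Qed.

Definition Wit AP (p : trace AP) (i K : nat) (f : ltl AP) : Prop :=
  match f with
  | LUntil a b => T p f i -> exists k, i + k < K /\ T p b (i + k) /\ forall m, m < k -> T p a (i + m)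
  | _ => True
  end.
Arguments Wit {AP}.

Definition Good AP (p : trace AP) (i j : nat) (f : ltl AP) : Prop :=
  (T p f i <-> T p f j) /\ Wit p i j f.
Arguments Good {AP}.

Definition tau AP (p : trace AP) (i j : nat) : trace AP := fun n => p (gf i j n).
Arguments tau {AP}.

Lemma shift AP (p : trace AP) i j f n : Good p i j f ->
  (T p f (gf i j n.+1) <-> T p f (gf i j n).+1).
Proof.
move=> [Hg _]; case: (gf_S i j n) => [-> //|[-> ->]].
by split=> H; apply/Hg.
Qed.

Lemma claim AP (p : trace AP) i j (hij : i < j) (F : ltl AP) :
  (forall f, List.In f (sub F) -> Good p i j f) ->
  forall n, T (tau p i j) F n <-> T p F (gf i j n).
Proof.
elim: F => [|a|g IH|g IHg h IHh|g IH|g IHg h IHh] /= HG n.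
- by [].
- by rewrite !T_atom.
- have := IH (fun f hf => HG f (or_intror hf)) n; rewrite /T /=; tauto.
- have := IHg (fun f hf => HG f (or_intror (List.in_or_app _ _ _ (or_introl hf)))) n.
  have := IHh (fun f hf => HG f (or_intror (List.in_or_app _ _ _ (or_intror hf)))) n.
  rewrite /T /=; tauto.
- have IH' := IH (fun f hf => HG f (or_intror hf)).
  rewrite !T_next IH'; apply: shift; apply: HG; right; exact: sub_self.
- have IHg' := IHg (fun f hf => HG f (or_intror (List.in_or_app _ _ _ (or_introl hf)))).
  have IHh' := IHh (fun f hf => HG f (or_intror (List.in_or_app _ _ _ (or_intror hf)))).
  have GU : Good p i j (LUntil g h) by apply: HG; left.
  have Gg : Good p i j g.
    apply: HG; right; apply: List.in_or_app; left; exact: sub_self.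
  split.
  + move=> /T_until [k [Hk Hm]].
    elim: k n Hk Hm => [|k IHk] n Hk Hm.
      by apply: U_base; apply/IHh'; move: Hk; rewrite addn0.
    apply: U_step.
      by apply/IHg'; move: (Hm 0 isT); rewrite addn0.
    apply/(@shift _ p i j _ n GU).
    apply/IHk.
      by have <- : n + k.+1 = n.+1 + k by lia.
    move=> m hm; have -> : n.+1 + m = n + m.+1 by lia.
    by apply: Hm.
  + have A : forall k n, gf i j n + k < j -> T p h (gf i j n + k) ->
        (forall m, m < k -> T p g (gf i j n + m)) -> T (tau p i j) (LUntil g h) n.
      elim=> [|k IHk] n0 hlt Hh Hg.
        by apply: U_base; apply/IHh'; rewrite -[gf _ _ _]addn0.
      have e1 : gf i j n0.+1 = gf i j n0 + 1 by rewrite -addn1 gf_add //; lia.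
      apply: U_step.
        by apply/IHg'; rewrite -[gf _ _ _]addn0; apply: Hg.
      apply: IHk; rewrite e1.
      * lia.
      * by have -> : gf i j n0 + 1 + k = gf i j n0 + k.+1 by lia.
      * move=> m hm; have -> : gf i j n0 + 1 + m = gf i j n0 + m.+1 by lia.
        by apply: Hg.
    move=> /T_until [k [Hk Hm]].
    have hx := @gf_lt i j n hij.
    case: (ltnP (gf i j n + k) j) => hk; first exact: (A k n hk Hk Hm).
    set d := j - gf i j n.
    have Uj : T p (LUntil g h) j.
      have -> : j = gf i j n + d by rewrite /d; lia.
      apply: (@U_fwd _ p g h (gf i j n) k d Hk Hm); rewrite /d; lia.
    have /(proj2 GU) [k' [hk' [Hh' Hg']]] : T p (LUntil g h) i by apply/(proj1 GU).
    have Ui : T (tau p i j) (LUntil g h) (n + d).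
      apply: (A k'); rewrite /d gf_wrap //.
    apply: (@U_back _ (tau p i j) g h n d Ui) => m hm.
    apply/IHg'; rewrite gf_add; last by rewrite /d in hm; lia.
    apply: Hm; rewrite /d in hm; lia.
Qed.
Arguments bQ {AP}. Arguments binit {AP}. Arguments bdelta {AP}. Arguments bacc {AP}.


Lemma tau_lang AP (A : buchi AP) (p : trace AP) (r : nat -> bQ A) i j a :
  i < j -> r 0 \in binit A -> (forall n, bdelta A (r n) (p n) (r n.+1)) ->
  r i = r j -> i <= a -> a < j -> r a \in bacc A -> lang A (tau p i j).
Proof.
move=> hij h0 hd hr hia haj hacc; exists (fun n => r (gf i j n)); split; first by [].
split.
  move=> n; change (bdelta A (r (gf i j n)) (p (gf i j n)) (r (gf i j n.+1))); case: (gf_S i j n) => [->|[e ->]]; first exact: hd.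
  by have := hd (gf i j n); rewrite e -hr.
move=> N; exists (N + (j - gf i j N) + (a - i)); split; first lia.
have w := @gf_wrap i j N hij.
have e : gf i j (N + (j - gf i j N) + (a - i)) = a.
  rewrite gf_add w; lia.
by rewrite /= e.
Qed.

Lemma lasso_kripke AP (p : trace AP) i j : i < j ->
  exists M : kripke AP, ktrace M (tau p i j) /\ forall q, ktrace M q -> q = tau p i j.
Proof.
move=> hij.
have j0 : 0 < j by lia.
have ne : [set s : 'I_j | val s == 0] != set0.
  apply/set0Pn; exists (Ordinal j0); by rewrite inE.
have tot : forall s : 'I_j, exists s' : 'I_j, (val s' == gstep i j (val s)).
  move=> s; exists (Ordinal (@gstep_lt i j (val s) hij (ltn_ord s))); by [].
exists (@Kripke AP 'I_j [set s : 'I_j | val s == 0] (fun s s' => val s' == gstep i j (val s))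
          (fun s => p (val s)) ne tot).
split.
  exists (fun n => Ordinal (@gf_lt i j n hij)); split; last by [].
  split; first by rewrite inE.
  by move=> n /=.
move=> q [r [[r0 rT] rl]].
have E : forall n, val (r n) = gf i j n.
  elim=> [|n IH]; first by move: r0; rewrite inE => /eqP.
  by move: (rT n) => /= /eqP ->; rewrite IH.
apply: functional_extensionality => n; by rewrite rl /= E.
Qed.

Lemma pigeon (X : finType) (f : nat -> X) : exists t, forall N, exists x, N <= x /\ f x = t.
Proof.
apply: NNPP => H.
have H' : forall t, exists N, forall x, N <= x -> f x != t.
  move=> t; apply: NNPP => Ht; apply: H; exists t => N; apply: NNPP => HN; apply: Ht.
  exists N => x hx; apply/eqP => e; apply: HN; by exists x.
have : forall s : seq X, exists N, forall x, N <= x -> f x \notin s.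
  elim=> [|t s [N HN]]; first by exists 0.
  have [N' HN'] := H' t; exists (maxn N N') => x hx.
  rewrite in_cons negb_or HN' ?HN //; lia.
move=> /(_ (enum X)) [N HN]; move: (HN N (leqnn N)); by rewrite mem_enum.
Qed.

Definition tb (P : Prop) : bool := if excluded_middle_informative P then true else false.
Lemma tbE (P Q : Prop) : tb P = tb Q -> (P <-> Q).
Proof. rewrite /tb; do 2 case: excluded_middle_informative => //; tauto. Qed.

Lemma Wit_mono AP (p : trace AP) i K K' f : K <= K' -> Wit p i K f -> Wit p i K' f.
Proof.
case: f => //= a b hK H /H [k [hk Hk]]; exists k; split; [lia | exact: Hk].
Qed.

Lemma wit_bound AP (p : trace AP) i (L : list (ltl AP)) :
  exists K, forall f, List.In f L -> Wit p i K f.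
Proof.
elim: L => [|f L [K HK]]; first by exists 0.
have [K1 H1] : exists K1, Wit p i K1 f.
  case: f => [|a|g|g h|g|g h]; try by exists 0.
  case: (classic (T p (LUntil g h) i)) => [HU|HU]; last by exists 0 => /= /HU.
  move: (HU) => /T_until [k [Hk Hm]]; exists (i + k).+1 => /= _; exists k; split; [lia|by split].
exists (maxn K K1) => f' [<-|hf']; first by apply: (@Wit_mono _ p i K1 _ f _ H1); lia.
by apply: (@Wit_mono _ p i K _ f' _ (HK f' hf')); lia.
Qed.

Lemma select AP (A : buchi AP) (p : trace AP) (r : nat -> bQ A) (L : list (ltl AP)) :
  (forall n, exists m, n <= m /\ r m \in bacc A) ->
  exists i j a, [/\ i < j, r i = r j, i <= a < j, r a \in bacc A &
     forall f, List.In f L -> Good p i j f].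
Proof.
move=> hacc.
pose ty (x : nat) : (bQ A * {ffun 'I_(length L) -> bool})%type :=
  (r x, [ffun k : 'I_(length L) => tb (T p (List.nth (val k) L LFalse) x)]).
have [t Ht] := pigeon _ ty.
have [i [_ hi]] := Ht 0.
have [K HK] := @wit_bound _ p i L.
have [a [hia ha]] := hacc i.
have [j [hj hj']] := Ht (maxn K a.+1).
exists i, j, a; split.
- lia.
- by move: hi; rewrite -hj' /ty => -[].
- apply/andP; split; lia.
- by [].
move=> f hf; split; last by apply: (@Wit_mono _ p i K _ f _ (HK f hf)); lia.
have [k [hk ek]] := List.In_nth L f LFalse hf.
have hk' : k < length L by apply/ltP.
move: hi; rewrite -hj' /ty => -[] _ /ffunP /(_ (Ordinal hk')).
rewrite !ffunE /= ek; exact: tbE.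
Qed.

Lemma T0 AP (q : trace AP) f : T q f 0 <-> models q f.
Proof.
rewrite /T; have -> : sfx q 0 = q by apply: functional_extensionality.
by [].
Qed.

Theorem mainTheorem14 (AP : finType) (hAP : 0 < #|AP|)
  (A : buchi AP) (phi : ltl AP) (A' : buchi AP)
  (hA' : forall pi : trace AP, lang A' pi <-> (lang A pi /\ models pi phi)) :
  forall psi : ltl AP,
    Cn (fun chi => supp A chi \/ chi = phi) psi <-> supp A' psi.
Proof.
move=> psi; split.
- move=> HC pi /hA' [[r [r0 [rd racc]]] Hphi].
  have [i [j [a [hij hr /andP[hia haj] ha HG]]]] := @select _ A pi r (sub phi ++ sub psi) racc.
  have HG1 : forall f, List.In f (sub phi) -> Good pi i j f.
    by move=> f hf; apply: HG; apply: List.in_or_app; left.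
  have HG2 : forall f, List.In f (sub psi) -> Good pi i j f.
    by move=> f hf; apply: HG; apply: List.in_or_app; right.
  have C1 := @claim _ pi i j hij phi HG1 0.
  have C2 := @claim _ pi i j hij psi HG2 0.
  rewrite /= !T0 in C1 C2.
  have [M [HtM HuM]] := @lasso_kripke _ pi i j hij.
  have Hl := @tau_lang _ A pi r i j a hij r0 rd hr hia haj ha.
  have : kmodels M psi.
    apply: HC => chi [Hs|->] q Hq; rewrite (HuM q Hq).
    - exact: Hs.
    - exact/C1.
  move=> /(_ _ HtM); apply C2.
- move=> HS M HM q Hq.
  have H1 : kmodels M (LOr (LNot phi) psi).
    apply: HM; left => pi Hpi /=.
    case: (classic (models pi phi)) => Hp; [right; apply: HS; exact/hA' | by left].
  have H2 : kmodels M phi by apply: HM; right.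
  by case: (H1 q Hq) => // /(_ (H2 q Hq)).
Qed.
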